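(* Let $F\in\mathbb{R}^{p\times n}$ be arbitrary, let $s\ge1$ and $k$ be integers, and let $(u,x,y)$ be a solution of the system over the time interval $[k+1,k+s]$ (with arbitrary state $x(k+1)$). Then there exists $v\in\mathbb{R}^{(s+n)p}$ such that $$\begin{bmatrix}u_s(k)\\ y_s(k)\end{bmatrix}=I_{G,s}(F)\,v .$$ Moreover, if $s\ge n$, then $\operatorname{rank} I_{G,s}(F)=sp+n$.
   Context: Consider the discrete-time LTI system $x(k+1)=Ax(k)+Bu(k)$, $y(k)=Cx(k)+Du(k)$ with $u\in\mathbb{R}^p$, $x\in\mathbb{R}^n$, $y\in\mathbb{R}^m$, $n\ge 1$, and $(A,B,C,D)$ a minimal (controllable and observable) realization. For a sequence $\phi$ and integers $k$, $s\ge1$, the stacked vector is $\phi_s(k)=[\phi(k+1)^T,\dots,\phi(k+s)^T]^T$. For $F\in\mathbb{R}^{p\times n}$ put $A_F=A+BF$ and $C_F=C+DF$. For an integer $s\ge1$ and a gain $F$, the finite-sample image representation consists of the matrices $M_s(F)\in\mathbb{R}^{sp\times(s+n)p}$ and $N_s(F)\in\mathbb{R}^{sm\times(s+n)p}$ whose $(l,j)$ blocks ($l=1,\dots,s$; $j=1,\dots,s+n$) are $M_{n+l-j}$ and $N_{n+l-j}$, respectively, where $M_k=FA_F^{k-1}B$ for $k\ge1$, $M_0=I_p$, $M_k=0$ for $k<0$, and $N_k=C_FA_F^{k-1}B$ for $k\ge1$, $N_0=D$, $N_k=0$ for $k<0$. Write $I_{G,s}(F)=\begin{bmatrix}M_s(F)\\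 N_s(F)\end{bmatrix}$. *)

(* Defs.v *)
From HB Require Import structures.
From mathcomp Require Import all_boot all_order all_algebra.
From mathcomp Require Import reals.
Set Implicit Arguments. Unset Strict Implicit. Unset Printing Implicit Defensive.
Import Order.TTheory GRing.Theory Num.Theory.
Local Open Scope ring_scope.

Section Defs.
Variable R : realType.

Definition controllable n p (A : 'M[R]_n) (B : 'M[R]_(n, p)) : Prop :=
  \rank (\mxrow_(j < n) (A ^+ j *m B)) = n.

Definition observable n m (A : 'M[R]_n) (C : 'M[R]_(m, n)) : Prop :=
  \rank (\mxcol_(i < n) (C *m A ^+ i)) = n.

Definition AF n p (A : 'M[R]_n) (B : 'M[R]_(n, p)) (F : 'M[R]_(p, n)) : 'M[R]_n :=
  A + B *m F.
Definition CF n p m (C : 'M[R]_(m, n)) (D : 'M[R]_(m, p)) (F : 'M[R]_(p, n))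
  : 'M[R]_(m, n) := C + D *m F.

Definition Mk n p (A : 'M[R]_n) (B : 'M[R]_(n, p)) (F : 'M[R]_(p, n)) (k : int)
  : 'M[R]_p :=
  match k with
  | Posz 0 => 1%:M
  | Posz t.+1 => F *m (AF A B F) ^+ t *m B
  | Negz _ => 0
  end.

Definition Nk n p m (A : 'M[R]_n) (B : 'M[R]_(n, p)) (C : 'M[R]_(m, n))
  (D : 'M[R]_(m, p)) (F : 'M[R]_(p, n)) (k : int) : 'M[R]_(m, p) :=
  match k with
  | Posz 0 => D
  | Posz t.+1 => CF C D F *m (AF A B F) ^+ t *m B
  | Negz _ => 0
  end.

(* M_s(F): block (l, j) (0-based here) is M_{n + l - j}, which equals
   M_{n + l' - j'} for the 1-based indices l' = l+1, j' = j+1 *)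
Definition Ms n p (A : 'M[R]_n) (B : 'M[R]_(n, p)) (F : 'M[R]_(p, n)) (s : nat)
  : 'M[R]_(\sum_(l < s) p, \sum_(j < s + n) p) :=
  \mxblock_(l < s, j < s + n) Mk A B F (n%:Z + l%:Z - j%:Z).

Definition Ns n p m (A : 'M[R]_n) (B : 'M[R]_(n, p)) (C : 'M[R]_(m, n))
  (D : 'M[R]_(m, p)) (F : 'M[R]_(p, n)) (s : nat)
  : 'M[R]_(\sum_(l < s) m, \sum_(j < s + n) p) :=
  \mxblock_(l < s, j < s + n) Nk A B C D F (n%:Z + l%:Z - j%:Z).

Definition IG n p m (A : 'M[R]_n) (B : 'M[R]_(n, p)) (C : 'M[R]_(m, n))
  (D : 'M[R]_(m, p)) (F : 'M[R]_(p, n)) (s : nat) :=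
  col_mx (Ms A B F s) (Ns A B C D F s).

Definition stack q (phi : int -> 'cV[R]_q) (k : int) (s : nat)
  : 'cV[R]_(\sum_(l < s) q) :=
  \mxcol_(l < s) phi (k + (l.+1)%:Z).

Definition solves_on n p m (A : 'M[R]_n) (B : 'M[R]_(n, p)) (C : 'M[R]_(m, n))
  (D : 'M[R]_(m, p)) (u : int -> 'cV[R]_p) (x : int -> 'cV[R]_n)
  (y : int -> 'cV[R]_m) (k : int) (s : nat) : Prop :=
  (forall t : int, k + 1 <= t -> t + 1 <= k + s%:Z ->
     x (t + 1) = A *m x t + B *m u t) /\
  (forall t : int, k + 1 <= t -> t <= k + s%:Z ->
     y t = C *m x t + D *m u t).

End Defs.

(* Main.v *)
Require Import Defs.
From HB Require Import structures.
From mathcomp Require Import all_boot all_order all_algebra.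
From mathcomp Require Import reals.
From mathcomp Require Import zify.
Set Implicit Arguments. Unset Strict Implicit. Unset Printing Implicit Defensive.
Import Order.TTheory GRing.Theory Num.Theory.
Local Open Scope ring_scope.

Lemma mxS (R : realType) a (Am : 'M[R]_a) t : Am *m Am ^+ t = Am ^+ t.+1.
Proof. by rewrite exprS mulmxE. Qed.

Lemma conv_step (R : realType) a b (Am : 'M[R]_a) (Bm : 'M[R]_(a, b))
  (Z : nat -> 'cV[R]_b) (i : nat) :
  \sum_(j < i.+1) Am ^+ (i.+1.-1 - j) *m Bm *m Z j =
  Am *m (\sum_(j < i) Am ^+ (i.-1 - j) *m Bm *m Z j) + Bm *m Z i.
Proof.
rewrite big_ord_recr /= subnn expr0 mul1mx mulmx_sumr; congr (_ + _).
apply: eq_bigr => j _; rewrite !mulmxA mxS; congr (_ ^+ _ *m _ *m _).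
have := ltn_ord j; lia.
Qed.

Lemma unroll (R : realType) a b (Am : 'M[R]_a) (Bm : 'M[R]_(a, b))
  (X : nat -> 'cV[R]_a) (U : nat -> 'cV[R]_b) (i0 l : nat) :
  (forall j, (j < l)%N -> X (i0 + j).+1 = Am *m X (i0 + j) + Bm *m U (i0 + j)) ->
  X (i0 + l)%N = Am ^+ l *m X i0 + \sum_(j < l) Am ^+ (l.-1 - j) *m Bm *m U (i0 + j)%N.
Proof.
elim: l => [|l IH] H; first by rewrite addn0 expr0 mul1mx big_ord0 addr0.
rewrite addnS H // IH; last by move=> j hj; apply: H; lia.
rewrite (conv_step Am Bm (fun j => U (i0 + j)%N)) mulmxDr !mulmxA mxS.
by rewrite addrA.
Qed.

Lemma toep_sum (R : realType) a b (f : int -> 'M[R]_(a, b)) (G : nat -> 'M[R]_(a, b))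
  (E0 : 'M[R]_(a, b)) (W : nat -> 'cV[R]_b) (N i : nat) :
  f 0 = E0 -> (forall t, f (Posz t.+1) = G t) -> (forall t, f (Negz t) = 0) ->
  (i < N)%N ->
  \sum_(j < N) f (i%:Z - j%:Z) *m W j = \sum_(j < i) G (i.-1 - j)%N *m W j + E0 *m W i.
Proof.
move=> f0 fS fN hi.
rewrite -(big_mkord xpredT (fun j => f (i%:Z - j%:Z) *m W j)).
rewrite (big_cat_nat _ (n := i)) //=; last by apply: ltnW.
rewrite [\sum_(i <= _ < N) _]big_ltn // subrr f0.
rewrite [X in _ + (_ + X)]big_nat_cond [X in _ + (_ + X)]big1 ?addr0; last first.
  move=> j /andP[/andP[hj _] _].
  have -> : i%:Z - j%:Z = Negz (j - i.+1) by rewrite NegzE; lia.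
  by rewrite fN mul0mx.
congr (_ + _); rewrite big_mkord; apply: eq_bigr => j _.
have -> : i%:Z - j%:Z = Posz (i.-1 - j).+1 by have := ltn_ord j; lia.
by rewrite fS.
Qed.

Lemma factor_rank (R : realType) r c k (Am : 'M[R]_(r, c)) (G : 'M[R]_(r, k)) :
  (forall v : 'cV[R]_c, exists z : 'cV[R]_k, Am *m v = G *m z) ->
  (\rank Am <= \rank G)%N.
Proof.
move=> H0.
have H : forall v : 'cV[R]_c, exists z : 'cV[R]_k, Am *m v == G *m z.
  by move=> v; have [z hz] := H0 v; exists z; apply/eqP.
pose zc j := xchoose (H (delta_mx j 0)).
have hz : forall j, col j Am = G *m zc j.
  by move=> j; rewrite colE; apply/eqP; exact: (xchooseP (H (delta_mx j 0))).
pose Pm := \matrix_(i, j) zc j i 0.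
have -> : Am = G *m Pm.
  apply/matrixP => i j.
  have := congr1 (fun M : 'cV[R]_r => M i 0) (hz j).
  rewrite !mxE => ->; apply: eq_bigr => l _; by rewrite !mxE.
exact: mxrankM_maxl.
Qed.

Lemma inj_rank (R : realType) r k (G : 'M[R]_(r, k)) :
  (forall z : 'cV[R]_k, G *m z = 0 -> z = 0) -> \rank G = k.
Proof.
move=> H; rewrite -mxrank_tr; apply/eqP; change (row_free G^T); rewrite -kermx_eq0; apply/eqP.
apply/row_matrixP => i; rewrite row0.
have : (row i (kermx G^T) <= kermx G^T)%MS by apply: row_sub.
move/sub_kermxP => h.
have : G *m (row i (kermx G^T))^T = 0 by rewrite -[X in X *m _](trmxK G) -trmx_mul h trmx0.
by move/H/(congr1 trmx); rewrite trmxK trmx0.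
Qed.

Lemma rank_inj (R : realType) r k (G : 'M[R]_(r, k)) (z : 'cV[R]_k) :
  \rank G = k -> G *m z = 0 -> z = 0.
Proof.
move=> hr hz.
have hf : row_free G^T by rewrite /row_free mxrank_tr hr.
apply: trmx_inj; apply: (row_free_inj hf).
by rewrite -trmx_mul hz !trmx0 mul0mx.
Qed.

Definition ext (R : realType) q N (f : 'I_N -> 'cV[R]_q) (j : nat) : 'cV[R]_q :=
  match insub j with Some o => f o | None => 0 end.

Lemma extE (R : realType) q N (f : 'I_N -> 'cV[R]_q) (o : 'I_N) : ext f o = f o.
Proof. by rewrite /ext valK. Qed.

Lemma part1 (R : realType) (n p m : nat)
  (A : 'M[R]_n) (B : 'M[R]_(n, p)) (C : 'M[R]_(m, n)) (D : 'M[R]_(m, p))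
  (Hn : (1 <= n)%N) (Hctrb : controllable A B)
  (F : 'M[R]_(p, n)) (s : nat) :
  (forall (k : int) (u : int -> 'cV[R]_p) (x : int -> 'cV[R]_n)
          (y : int -> 'cV[R]_m),
     solves_on A B C D u x y k s ->
     exists v : 'cV[R]_(\sum_(j < s + n) p),
       col_mx (stack u k s) (stack y k s) = IG A B C D F s *m v).
Proof.
move=> k u x y [Hx Hy].
pose Ctrb := \mxrow_(j < n) (A ^+ j *m B).
have : row_free Ctrb by rewrite /row_free; apply/eqP; exact: Hctrb.
case/row_freeP => Q hQ.
pose zz := Q *m x (k + 1).
pose Z := ext (fun o : 'I_n => submxcol zz (rev_ord o)).
have steer : \sum_(j < n) A ^+ (n.-1 - j) *m B *m Z j = x (k + 1).
  have -> : x (k + 1) = Ctrb *m zz by rewrite /zz mulmxA hQ mul1mx.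
  rewrite -[zz]submxcolK mul_mxrow_mxcol (reindex_inj rev_ord_inj) /=.
  apply: eq_bigr => j _.
  have e : (n - j.+1)%N = rev_ord j by [].
  rewrite [in Z _]e /Z extE rev_ordK.
  have -> : (n.-1 - (n - j.+1) = j)%N by have := ltn_ord j; lia.
  by [].
pose tt (i : nat) : int := k + 1 - n%:Z + i%:Z.
pose U i := if (i < n)%N then Z i else u (tt i).
pose X i := if (i < n)%N then \sum_(j < i) A ^+ (i.-1 - j) *m B *m Z j else x (tt i).
pose W i := U i - F *m X i.
have stepX : forall i, (i.+1 < n + s)%N -> X i.+1 = A *m X i + B *m U i.
  move=> i hi; rewrite /X /U.
  case: (ltnP i.+1 n) => h1.
    by rewrite (ltnW h1) conv_step.
  have hin : (i < n)%N = (i.+1 == n).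
    by apply/idP/idP => [h|/eqP <-//]; apply/eqP; lia.
  rewrite hin; case: eqP => [e|ne].
    rewrite -conv_step e steer /tt; congr x; lia.
  have hni : (n <= i)%N by lia.
  have -> : tt i.+1 = tt i + 1 by rewrite /tt; lia.
  rewrite /= Hx // /tt; lia.
have stepW : forall i, (i.+1 < n + s)%N -> X i.+1 = AF A B F *m X i + B *m W i.
  move=> i hi; rewrite stepX // /W /AF mulmxDl mulmxBr !mulmxA.
  by rewrite [B *m U i - _]addrC addrA addrK.
have X0 : X 0%N = 0 by rewrite /X Hn big_ord0.
have Xcl : forall i, (i < n + s)%N ->
    X i = \sum_(j < i) AF A B F ^+ (i.-1 - j) *m B *m W j.
  move=> i hi; have := @unroll R n p (AF A B F) B X W 0 i.
  rewrite add0n X0 mulmx0 add0r; apply => j hj; rewrite add0n; apply: stepW; lia.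
have hU : forall l, (l < s)%N -> u (k + (l.+1)%:Z) = F *m X (n + l)%N + W (n + l)%N.
  move=> l hl; rewrite /W [F *m _ + _]addrC subrK /U ifF; last by lia.
  by congr u; rewrite /tt; lia.
have hY : forall l, (l < s)%N -> y (k + (l.+1)%:Z) = CF C D F *m X (n + l)%N + D *m W (n + l)%N.
  move=> l hl; rewrite Hy; [|lia|lia].
  have -> : x (k + (l.+1)%:Z) = X (n + l)%N by rewrite /X ifF; [congr x; rewrite /tt|]; lia.
  rewrite hU // /CF mulmxDl mulmxDr !mulmxA addrA.
  by [].
exists (\mxcol_(j < s + n) W j).
rewrite /IG mul_col_mx /Ms /Ns !mul_mxblock_mxrow /stack.
congr col_mx; apply: eq_mxcol => l.
  rewrite hU // -PoszD (@toep_sum R p p _ (fun t => F *m AF A B F ^+ t *m B) 1%:M) //; last by have := ltn_ord l; lia.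
  rewrite Xcl; last by have := ltn_ord l; lia.
  by rewrite mulmx_sumr mul1mx; congr (_ + _); apply: eq_bigr => j _; rewrite !mulmxA.
rewrite hY // -PoszD (@toep_sum R m p _ (fun t => CF C D F *m AF A B F ^+ t *m B) D) //; last by have := ltn_ord l; lia.
rewrite Xcl; last by have := ltn_ord l; lia.
by rewrite mulmx_sumr; congr (_ + _); apply: eq_bigr => j _; rewrite !mulmxA.
Qed.

Definition Tk (R : realType) n p m (A : 'M[R]_n) (B : 'M[R]_(n, p)) (C : 'M[R]_(m, n))
  (D : 'M[R]_(m, p)) (k : int) : 'M[R]_(m, p) :=
  match k with
  | Posz 0 => D
  | Posz t.+1 => C *m A ^+ t *m B
  | Negz _ => 0
  end.

Definition Gp (R : realType) n p m (A : 'M[R]_n) (B : 'M[R]_(n, p)) (C : 'M[R]_(m, n))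
  (D : 'M[R]_(m, p)) (s : nat) :
  'M[R]_(\sum_(l < s) p + \sum_(l < s) m, n + \sum_(l < s) p) :=
  block_mx (0 : 'M[R]_(\sum_(l < s) p, n)) (1%:M : 'M[R]_(\sum_(l < s) p))
    (\mxcol_(l < s) (C *m A ^+ l))
    (\mxblock_(l < s, j < s) Tk A B C D (l%:Z - j%:Z)).

Lemma Gp_traj (R : realType) n p m (A : 'M[R]_n) (B : 'M[R]_(n, p)) (C : 'M[R]_(m, n))
  (D : 'M[R]_(m, p)) (s : nat) (x0 : 'cV[R]_n) (W : nat -> 'cV[R]_p) :
  Gp A B C D s *m col_mx x0 (\mxcol_(j < s) W j) =
  col_mx (\mxcol_(l < s) W l)
    (\mxcol_(l < s) (C *m (A ^+ l *m x0 + \sum_(j < l) A ^+ (l.-1 - j) *m B *m W j)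
        + D *m W l)).
Proof.
rewrite /Gp mul_block_col mul0mx add0r mul1mx mxcol_mul mul_mxblock_mxrow -mxcolD.
congr col_mx; apply: eq_mxcol => l.
rewrite (@toep_sum R m p _ (fun t => C *m A ^+ t *m B) D) //.
rewrite mulmxDr mulmx_sumr addrA !mulmxA; congr (_ + _ + _).
by apply: eq_bigr => j _; rewrite !mulmxA.
Qed.

Lemma rank_Gp (R : realType) n p m (A : 'M[R]_n) (B : 'M[R]_(n, p)) (C : 'M[R]_(m, n))
  (D : 'M[R]_(m, p)) (s : nat) (Hobs : observable A C) (hs : (n <= s)%N) :
  \rank (Gp A B C D s) = (n + \sum_(l < s) p)%N.
Proof.
apply: inj_rank => z hz.
rewrite -[z]vsubmxK in hz *.
set x0 := usubmx z in hz *; set w := dsubmx z in hz *.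
pose W := ext (submxcol w).
have hw : w = \mxcol_(j < s) W j.
  by rewrite -{1}[w]submxcolK; apply: eq_mxcol => j; rewrite /W extE.
rewrite hw Gp_traj in hz.
move/eqP: hz; rewrite col_mx_eq0 => /andP[/eqP h1 /eqP h2].
have Wz : forall j, (j < s)%N -> W j = 0.
  move=> j hj; have := congr1 (fun M => submxcol M (Ordinal hj)) h1.
  by rewrite mxcolK submxcol0.
have hC : forall l, (l < s)%N -> C *m A ^+ l *m x0 = 0.
  move=> l hl; have := congr1 (fun M => submxcol M (Ordinal hl)) h2.
  rewrite mxcolK submxcol0 /= Wz // mulmx0 addr0 big1 ?addr0 ?mulmxA //.
  by move=> j _; rewrite Wz ?mulmx0 //; have := ltn_ord j; lia.
have hx0 : x0 = 0.
  apply: (rank_inj Hobs).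
  rewrite mxcol_mul -(mxcol0 (p_ := fun=> m)); apply: eq_mxcol => i.
  by apply: hC; have := ltn_ord i; lia.
by rewrite hx0 hw h1 col_mx0.
Qed.

Lemma T3 (R : realType) (n p m : nat)
  (A : 'M[R]_n) (B : 'M[R]_(n, p)) (C : 'M[R]_(m, n)) (D : 'M[R]_(m, p))
  (F : 'M[R]_(p, n)) (s : nat) (v : 'cV[R]_(\sum_(j < s + n) p)) :
  exists z, IG A B C D F s *m v = Gp A B C D s *m z.
Proof.
pose Wv := ext (submxcol v).
have hv : v = \mxcol_(j < s + n) Wv j.
  by rewrite -{1}[v]submxcolK; apply: eq_mxcol => j; rewrite /Wv extE.
pose Xc i := \sum_(j < i) AF A B F ^+ (i.-1 - j) *m B *m Wv j.
pose Uc i := F *m Xc i + Wv i.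
have stepc : forall i, Xc i.+1 = A *m Xc i + B *m Uc i.
  move=> i; rewrite /Xc conv_step /Uc /AF mulmxDl mulmxDr !mulmxA.
  by rewrite addrA.
exists (col_mx (Xc n) (\mxcol_(l < s) Uc (n + l)%N)).
rewrite (Gp_traj _ _ _ _ _ (Xc n) (fun j => Uc (n + j)%N)) hv /IG mul_col_mx /Ms /Ns !mul_mxblock_mxrow.
have hX : forall l, Xc (n + l)%N =
    A ^+ l *m Xc n + \sum_(j < l) A ^+ (l.-1 - j) *m B *m Uc (n + j)%N.
  by move=> l; apply: (@unroll R n p A B Xc Uc n l) => j _; exact: stepc.
congr col_mx; apply: eq_mxcol => l.
  rewrite -PoszD (@toep_sum R p p _ (fun t => F *m AF A B F ^+ t *m B) 1%:M) //; last first.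
    by have := ltn_ord l; lia.
  rewrite /Uc /Xc mulmx_sumr mul1mx; congr (_ + _); apply: eq_bigr => j _; by rewrite !mulmxA.
rewrite -PoszD (@toep_sum R m p _ (fun t => CF C D F *m AF A B F ^+ t *m B) D) //; last first.
  by have := ltn_ord l; lia.
rewrite -hX /Uc /CF mulmxDr addrA; congr (_ + _).
rewrite mulmxA -mulmxDl /Xc mulmx_sumr; apply: eq_bigr => j _; by rewrite !mulmxA.
Qed.

Lemma T2 (R : realType) (n p m : nat)
  (A : 'M[R]_n) (B : 'M[R]_(n, p)) (C : 'M[R]_(m, n)) (D : 'M[R]_(m, p))
  (Hn : (1 <= n)%N) (Hctrb : controllable A B)
  (F : 'M[R]_(p, n)) (s : nat) (z : 'cV[R]_(n + \sum_(l < s) p)) :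
  exists v, Gp A B C D s *m z = IG A B C D F s *m v.
Proof.
rewrite -[z]vsubmxK.
set x0 := usubmx z; set w := dsubmx z.
pose W := ext (submxcol w).
have hw : w = \mxcol_(j < s) W j.
  by rewrite -{1}[w]submxcolK; apply: eq_mxcol => j; rewrite /W extE.
pose Xo i := A ^+ i *m x0 + \sum_(j < i) A ^+ (i.-1 - j) *m B *m W j.
have stepo : forall i, Xo i.+1 = A *m Xo i + B *m W i.
  by move=> i; rewrite /Xo conv_step mulmxDr mulmxA mxS addrA.
pose u (t : int) := W (absz t).-1.
pose x (t : int) := Xo (absz t).-1.
pose y (t : int) := C *m x t + D *m u t.
have hsol : solves_on A B C D u x y 0 s.
  split => // t ht _.
  case: t ht => [a|a] ht; last by move: ht; rewrite NegzE; lia.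
  have -> : Posz a + 1 = Posz a.+1 by rewrite -addn1 PoszD.
  rewrite /x /u /=.
  have -> : a = (a.-1).+1 by move: ht; rewrite add0r; lia.
  by rewrite stepo.
have [v hv] := @part1 R n p m A B C D Hn Hctrb F s 0 u x y hsol.
exists v; rewrite -hv hw Gp_traj /stack.
by congr col_mx; apply: eq_mxcol => l; rewrite /y /x /u add0r.
Qed.

Unset Implicit Arguments.

Theorem theorem1 (R : realType) (n p m : nat)
  (A : 'M[R]_n) (B : 'M[R]_(n, p)) (C : 'M[R]_(m, n)) (D : 'M[R]_(m, p))
  (Hn : (1 <= n)%N) (Hctrb : controllable A B) (Hobs : observable A C)
  (F : 'M[R]_(p, n)) (s : nat) (Hs : (1 <= s)%N) :
  (forall (k : int) (u : int -> 'cV[R]_p) (x : int -> 'cV[R]_n)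
          (y : int -> 'cV[R]_m),
     solves_on A B C D u x y k s ->
     exists v : 'cV[R]_(\sum_(j < s + n) p),
       col_mx (stack u k s) (stack y k s) = IG A B C D F s *m v) /\
  ((n <= s)%N -> \rank (IG A B C D F s) = (s * p + n)%N).
Proof.
split; first exact: part1.
move=> hs; apply/eqP; rewrite eqn_leq.
have e : (s * p + n = n + \sum_(l < s) p)%N by rewrite sum_nat_const card_ord addnC.
rewrite e -(rank_Gp B D Hobs hs).
rewrite (factor_rank (@T3 R n p m A B C D F s)) /=.
apply: factor_rank => z; have [v hv] := @T2 R n p m A B C D Hn Hctrb F s z.
by exists v.
Qed.
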